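(* Let $G$ be a finite group, $P$ a Sylow $p$-subgroup of $G$, and $N$ a normal subgroup of $G$ such that $P$ acts fixed-point-freely on $N$ by conjugation (i.e. $C_N(x)=1$ for every $1\neq x\in P$). Then for every $\chi\in{\rm Irr}(G)$ with $N\nleq\ker\chi$, the prime $p$ does not divide ${\rm cod}(\chi)=|G:\ker\chi|/\chi(1)$.
   Context: ${\rm Irr}(G)$ denotes the set of complex irreducible characters of $G$. *)

(* Defs.v *)
From mathcomp Require Import all_boot all_order all_algebra all_fingroup all_solvable all_field all_character.
Set Implicit Arguments. Unset Strict Implicit. Unset Printing Implicit Defensive.
Import GRing.Theory Num.Theory.
Local Open Scope ring_scope.

Definition cod (gT : finGroupType) (G : {group gT}) (chi : 'CF(G)) : algC :=
  (#|G : cfker chi|%g)%:R / chi 1%g.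

(* Main.v *)
Require Import Defs.
From mathcomp Require Import all_boot all_order all_algebra all_fingroup all_solvable all_field all_character.
Import GRing.Theory Num.Theory.
Local Open Scope ring_scope.

Theorem mainTheorem3 (gT : finGroupType) (G P N : {group gT}) (p : nat) :
  prime p ->
  (P \in 'Syl_p(G))%g ->
  (N <| G)%g ->
  (forall x, x \in P -> x != 1%g -> ('C_N[x] = 1)%g) ->
  forall i : Iirr G, ~~ (N \subset cfker 'chi_i)%g ->
    ~~ (p%:R %| cod 'chi_i)%C.
Proof.
move=> pr_p sylP nsNG regP i notNK.
have sylP' : (p.-Sylow(G) P)%g by move: sylP; rewrite inE.
have sPG : (P \subset G)%g by case/andP: sylP'.
have [sNG nNG] := andP nsNG.
have nNP : (P \subset 'N(N))%g := subset_trans sPG nNG.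
have tiNP : (N :&: P = 1)%g.
  apply/trivgP/subsetP => y /setIP[Ny Py]; rewrite inE.
  apply/negPn/negP => nty.
  have := regP y Py nty => /setP/(_ y).
  by rewrite in_setI Ny cent1id in_set1 (negPf nty).
have vanish : forall x, x \in P -> x != 1%g -> 'chi_i x = 0.
  move=> x Px ntx.
  have defH : (N ><| P = N <*> P)%g := sdprodEY nNP tiNP.
  set H := (N <*> P)%G.
  have ntN : (N :!=: 1)%g.
    by apply: contraNneq notNK => ->; apply: sub1G.
  have ntP : (P :!=: 1)%g.
    by apply/trivgPn; exists x.
  have frob : [Frobenius H = N ><| P]%g.
    apply/Frobenius_semiregularP => //.
    by move=> y /setD1P[nty Py]; apply: regP.
  have frobK := FrobeniusWker frob.
  have sHG : (H \subset G)%g by rewrite join_subG sNG sPG.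
  have Hx : x \in H by rewrite (subsetP (joing_subr N P)).
  have nsNH : (N <| H)%g by case/sdprod_context: defH.
  have notNx : x \notin N.
    apply: contra ntx => Nx; have : x \in (N :&: P)%g by rewrite inE Nx.
    by rewrite tiNP inE.
  rewrite -(cfResE _ sHG Hx) (cfun_sum_constt ('Res[H] 'chi_i)) sum_cfunE.
  rewrite big1 // => j Cj; rewrite cfunE.
  have: ~~ (N \subset cfker 'chi_j)%g.
    apply: contra notNK => NKj.
    apply: constt0_Res_cfker => //.
    have sNH : (N \subset H)%g by case/andP: nsNH.
    rewrite -(cfResRes _ sNH sHG).
    apply: (constt_Res_trans (cfRes_char _ (irr_char i)) Cj).
    rewrite irr_consttE (cfRes_sub_ker NKj) irr0 cfdotZl cfnorm1 mulr1.
    by rewrite irr1_neq0.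
  case/(Frobenius_Ind_irrP frobK) => k _ ->.
  by rewrite (cfun_on0 (cfInd_normal _ nsNH)) ?mulr0.
have [d chi1] : exists d, 'chi_i 1%g = d%:R by apply/natrP/Cnat_irr1.
have dvdPd : (#|P| %| d)%N.
  have := Cnat_cfdot_char (cfRes_char P (irr_char i)) (cfun1_char P).
  rewrite cfdotE (bigD1 1%g) //= big1 ?addr0; last first.
    by move=> y /andP[Py nty]; rewrite cfResE // vanish // mul0r.
  rewrite cfResE // chi1 cfun11 conjC1 mulr1 => /natrP[m].
  move/(congr1 (fun z => z * #|P|%:R)); rewrite mulrC mulVKf ?neq0CG //.
  by rewrite -natrM => /eqP; rewrite eqr_nat => /eqP->; apply: dvdn_mull.
have d_gt0 : (0 < d)%N.
  by rewrite lt0n -(eqr_nat algC) -chi1 irr1_neq0.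
apply/negP; rewrite /cod chi1 /dvdC pnatr_eq0 (negPf (lt0n_neq0 (prime_gt0 pr_p))).
rewrite unfold_in /=. set c := (_ / _ / _) => cZ.
have c_ge0 : 0 <= c by rewrite !divr_ge0 ?ler0n.
have /natrP[n] : c \is a Num.nat by rewrite natrEint cZ c_ge0.
rewrite /c => /(congr1 (fun z => z * p%:R * d%:R)).
rewrite divfK ?pnatr_eq0 -?lt0n ?prime_gt0 // divfK ?pnatr_eq0 -?lt0n //.
rewrite -!natrM => /eqP; rewrite eqr_nat => /eqP defI.
have : (#|G|`_p * p %| #|G|)%N.
  apply: dvdn_trans (dvdn_indexg G (cfker 'chi_i)).
  rewrite defI -(card_Hall sylP') mulnC -mulnA dvdn_mull //.
  by rewrite dvdn_pmul2l ?prime_gt0.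
rewrite p_part -expnSr pfactor_dvdn // ?cardG_gt0 //.
by rewrite ltnn.
Qed.
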